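(* Let $D$ be an in-round oriented graph. Then $D$ has dichromatic number at most $2$. More precisely, for every vertex $x$ there exists a colouring of $V(D)$ with two colours in which each colour class induces an acyclic subdigraph and $\{x\}\cup x^+$ is monochromatic.
   Context: Digraphs are finite, no loops, no parallel arcs; an oriented graph has no digon. $x^+$ is the out-neighbourhood of $x$. A cyclic order of $V$ is an equivalence class of linear orders under cyclic shifts; for vertices $u,v$, $[u,v]$ is the set of vertices met going forward from $u$ to $v$ in the cyclic order (inclusive) and $]u,v[=[u,v]\setminus\{u,v\}$. An oriented graph is in-round if there is a cyclic order of its vertices such that for every arc $xy$ and every $z\in\,]x,y[$, $zy$ is an arc. The dichromatic number is the least number of colours in a vertex colouring where each colour class induces a subdigraph with no directed cycle. *)

(* Defs.v *)
From mathcomp Require Import all_boot.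
Set Implicit Arguments. Unset Strict Implicit. Unset Printing Implicit Defensive.

(* Finiteness and absence of parallel arcs are
   built in; no loops and no digons are explicit hypotheses. *)
Definition loopless (T : finType) (E : rel T) : Prop := forall x, ~~ E x x.
Definition oriented (T : finType) (E : rel T) : Prop :=
  loopless E /\ forall x y, E x y -> ~~ E y x.

(* A cyclic order is represented by any of its linear orders, given by a
   bijection pos : T -> 'I_#|T| (the position of each vertex).
   cint_open pos x y z  <=>  z \in ]x,y[ , i.e. z is met strictly between x
   and y going forward from x in the cyclic order (x <> y case). *)
Definition cint_open (T : finType) (pos : T -> 'I_#|T|) (x y z : T) : bool :=
  if pos x < pos y then (pos x < pos z) && (pos z < pos y)
  else (pos x < pos z) || (pos z < pos y).

Definition in_round (T : finType) (E : rel T) : Prop :=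
  exists pos : T -> 'I_#|T|, bijective pos /\
    forall x y z, E x y -> cint_open pos x y z -> E z y.

Definition acyclic_in (T : finType) (E : rel T) (A : {set T}) : Prop :=
  forall s : seq T, s != [::] -> all (fun v => v \in A) s -> ~~ cycle E s.

Definition dicolouring (T : finType) (E : rel T) (k : nat) (c : T -> 'I_k) : Prop :=
  forall i : 'I_k, acyclic_in E [set v | c v == i].

Definition dichromatic_le (T : finType) (E : rel T) (k : nat) : Prop :=
  exists c : T -> 'I_k, dicolouring E c.

(* Main.v *)
Require Import Defs.
From mathcomp Require Import all_boot.
From mathcomp Require Import zify.
Set Implicit Arguments.

Section S.
Variables (T : finType) (E : rel T) (pos : T -> 'I_#|T|) (x : T).

Definition pp t : nat := pos t.
Definition rr t : nat := if pp x <= pp t then pp t - pp x else pp t + #|T| - pp x.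

Ltac crunch :=
  rewrite /cint_open /rr /pp;
  repeat (case: ifP => ?); move=> *; lia.

Lemma bnd t : pp t < #|T|. Proof. exact: ltn_ord. Qed.

Lemma factA y v : 0 < rr v -> rr v < rr y -> cint_open pos x y v.
Proof. have := bnd y; have := bnd v; have := bnd x. rewrite /pp. crunch. Qed.

Lemma factB u v y : rr v < rr u -> rr u < rr y -> cint_open pos u v y.
Proof. have := bnd y; have := bnd v; have := bnd x; have := bnd u. rewrite /pp. crunch. Qed.

Lemma factC u v : 0 < rr v -> rr v < rr u -> cint_open pos u v x.
Proof. have := bnd v; have := bnd x; have := bnd u. rewrite /pp. crunch. Qed.

Lemma rr_eq u v : rr u = rr v -> pp u = pp v.
Proof. have := bnd v; have := bnd x; have := bnd u. rewrite /pp. crunch. Qed.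

Lemma rrx : rr x = 0.
Proof. by rewrite /rr leqnn subnn. Qed.
End S.

Lemma path_incr (T : finType) (E : rel T) (f : T -> nat) (P : pred T) :
  (forall u v, P u -> P v -> E u v -> f u < f v) ->
  forall s a, P a -> all P s -> path E a s -> s != [::] -> f a < f (last a s).
Proof.
move=> H; elim=> [//|b s IH] a Pa /= /andP[Pb As] /andP[Eab Ps] _.
have ab := H _ _ Pa Pb Eab.
case: s IH As Ps => [|c s] IH As Ps /=; first by [].
apply: ltn_trans ab _; exact: IH.
Qed.

Lemma acyc_incr (T : finType) (E : rel T) (f : T -> nat) (A : {set T}) :
  (forall u v, u \in A -> v \in A -> E u v -> f u < f v) -> acyclic_in E A.
Proof.
move=> H [//|a s] _ /= /andP[Aa As]; apply/negP => /= Hc.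
have := @path_incr T E f (fun v => v \in A) H (rcons s a) a Aa.
rewrite all_rcons Aa As last_rcons ltnn => /(_ isT Hc); rewrite -size_eq0 size_rcons.
by move=> /(_ isT).
Qed.

Theorem proposition3p4 (T : finType) (E : rel T) :
  oriented E -> in_round E ->
  dichromatic_le E 2 /\
  (forall x : T, exists c : T -> 'I_2,
      dicolouring E c /\ (forall y, E x y -> c y = c x)).
Proof.
move=> [lo anti] [pos [[ipos posK _] IR]].
have inj : injective pos by exact: can_inj posK.
have main : forall x : T, exists c : T -> 'I_2,
      dicolouring E c /\ (forall y, E x y -> c y = c x).
  move=> x.
  pose b v := (v == x) || [exists w, E x w && (rr pos x v <= rr pos x w)].
  exists (fun v => @Ordinal 2 (b v) (leq_b1 _)).
  split; last first.
    move=> y Exy; apply: val_inj => /=.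
    have -> : b y by apply/orP; right; apply/existsP; exists y; rewrite Exy leqnn.
    by rewrite /b eqxx.
  move=> i; apply: (@acyc_incr _ _ (rr pos x)) => u v; rewrite !inE.
  move=> /eqP Hu /eqP Hv Euv.
  have cuv : b u = b v.
    have h := congr1 val (etrans Hu (esym Hv)); move: h => /=; by case: (b u); case: (b v).
  have neq : u != v by apply/eqP => uv; move: (lo u); rewrite {2}uv Euv.
  have rneq : rr pos x u != rr pos x v.
    apply: contra neq => /eqP /rr_eq /val_inj /inj ->; done.
  rewrite ltn_neqAle rneq /= leqNgt; apply/negP => lt_vu.
  have pos0 : forall t, t != x -> 0 < rr pos x t.
    move=> t tx; rewrite lt0n; apply: contra tx => /eqP H.
    apply/eqP/inj/val_inj; apply: (@rr_eq T pos x t x); by rewrite rrx.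
  case bu : (b u).
  - case/orP: bu => [/eqP ux|].
      by move: lt_vu; rewrite ux rrx.
    move/existsP => [y /andP[Exy le_uy]].
    have Evy : E v y.
      case: (eqVneq v x) => [->//|vx].
      apply: (IR x y v Exy); apply: factA; first exact: pos0.
      exact: leq_trans lt_vu le_uy.
    case: (eqVneq y u) => [yu|yu].
      by move: (anti _ _ Euv); rewrite -yu Evy.
    have lt_uy : rr pos x u < rr pos x y.
      rewrite ltn_neqAle le_uy andbT; apply: contra yu => /eqP /esym /rr_eq /val_inj /inj ->.
      done.
    have Eyv : E y v.
      apply: (IR u v y Euv); exact: (@factB _ pos x u v y lt_vu lt_uy).
    by move: (anti _ _ Eyv); rewrite Evy.
  - have bv : b v = false by rewrite -cuv.
    move: bv; rewrite /b => /norP[vx /existsP nex]; apply: nex.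
    exists v; rewrite leqnn andbT.
    apply: (IR u v x Euv); apply: factC => //; exact: pos0.
split => //.
case: (pickP (fun _ : T => true)) => [x0 _|none].
  by have [c [Hc _]] := main x0; exists c.
exists (fun _ => ord0) => i s; case: s => [//|a s]; by have := none a.
Qed.
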